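(* Let $d\ge2$, $1\le r_p\le n_p$ for $1\le p\le d$, let $f:\Omega\to\mathbb{R}$ be any function on $\Omega=\mathrm{St}(r_1,n_1,\mathbb{C})\times\cdots\times\mathrm{St}(r_d,n_d,\mathbb{C})$, and let $\tilde f=f\circ\rho$ on $\Upsilon=\mathcal{U}_{n_1}\times\cdots\times\mathcal{U}_{n_d}$. Then $f$ is scale invariant if and only if $\tilde f$ is scale invariant.
   Context: $\mathrm{St}(r,n,\mathbb{C})=\{X\in\mathbb{C}^{n\times r}:X^HX=I_r\}$, $\mathcal{U}_n$ the unitary group, and $\rho:\Upsilon\to\Omega$ keeps the first $r_p$ columns of the $p$-th component for each $p$. A function $g$ on $\mathrm{St}(r,n,\mathbb{C})$ is scale invariant if $g(XR)=g(X)$ for all $X$ and all $r\times r$ diagonal $R$ with unimodular diagonal entries. $f$ is scale invariant if for every $p$ and every fixed choice of the other components, the restricted function $X\mapsto f(X^{(1)},\dots,X^{(p-1)},X,X^{(p+1)},\dots,X^{(d)})$ on $\mathrm{St}(r_p,n_p,\mathbb{C})$ is scale invariant; $\tilde f$ is scale invariant in the same sense, with $\mathcal{U}_{n_p}=\mathrm{St}(n_p,n_p,\mathbb{C})$ in place of $\mathrm{St}(r_p,n_p,\mathbb{C})$. *)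

(* Defs.v *)
From HB Require Import structures.
From mathcomp Require Import all_boot all_order all_algebra.
From mathcomp Require Import reals.
From mathcomp Require Import complex.
Set Implicit Arguments. Unset Strict Implicit. Unset Printing Implicit Defensive.
Import Order.TTheory GRing.Theory Num.Theory.
Local Open Scope ring_scope.
Local Open Scope complex_scope.

Definition ctrmx (R : rcfType) (m n : nat) (X : 'M[R[i]]_(m, n)) : 'M[R[i]]_(n, m) :=
  (map_mx Num.conj X)^T.

Definition stiefel (R : rcfType) (n r : nat) (X : 'M[R[i]]_(n, r)) : Prop :=
  ctrmx X *m X = 1%:M.

(* g : St(r,n,C) -> R (given as a function on all n x r matrices, only its
   values on St(r,n,C) matter) is scale invariant:
   g (X R) = g X for every X in St(r,n,C) and every diagonal R with
   unimodular diagonal entries. *)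
Definition scale_invariant_St (R : rcfType) (n r : nat) (T : Type)
  (g : 'M[R[i]]_(n, r) -> T) : Prop :=
  forall X : 'M[R[i]]_(n, r), stiefel X ->
  forall D : 'rV[R[i]]_r, (forall j, `|D 0 j| = 1) ->
  g (X *m diag_mx D) = g X.

Definition scale_invariant_prod (R : rcfType) (d : nat) (n m : 'I_d -> nat)
  (T : Type) (h : (forall p : 'I_d, 'M[R[i]]_(n p, m p)) -> T) : Prop :=
  forall (p : 'I_d) (Xo : forall q : 'I_d, 'M[R[i]]_(n q, m q)),
    (forall q, q != p -> stiefel (Xo q)) ->
    scale_invariant_St (fun X : 'M[R[i]]_(n p, m p) =>
       h (@dfwith _ (fun q : 'I_d => 'M[R[i]]_(n q, m q)) Xo p X)).

Definition first_cols (R : rcfType) (n r : nat) (H : (r <= n)%N)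
  (U : 'M[R[i]]_n) : 'M[R[i]]_(n, r) :=
  \matrix_(a < n, j < r) U a (widen_ord H j).

Definition rho (R : rcfType) (d : nat) (n r : 'I_d -> nat)
  (H : forall p, (r p <= n p)%N)
  (U : forall p : 'I_d, 'M[R[i]]_(n p, n p)) : forall p : 'I_d, 'M[R[i]]_(n p, r p) :=
  fun p => first_cols (H p) (U p).

(* Main.v *)
Require Import Defs.
From HB Require Import structures.
From mathcomp Require Import all_boot all_order all_algebra.
From mathcomp Require Import reals.
From mathcomp Require Import complex.
From mathcomp Require Import sesquilinear spectral.
From Stdlib Require Import FunctionalExtensionality IndefiniteDescription.
Import Order.TTheory GRing.Theory Num.Theory.
Local Open Scope ring_scope.
Local Open Scope sesquilinear_scope.
Set Implicit Arguments. Unset Strict Implicit.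

Section S.
Variable R : rcfType.
Local Notation C := (R[i]).

Lemma ctrmxE m n (X : 'M[C]_(m, n)) : ctrmx X = (X ^t Num.conj)%R.
Proof. by rewrite /ctrmx map_trmx. Qed.

Local Notation O V := (orthomx Num.conj (mx_of_hermitian (hermitian1mx _)) V).

Lemma complete_rows0 r n (V : 'M[C]_(r, n)) : V \is unitarymx ->
  exists W : 'M[C]_(n - r, n), col_mx V W \is unitarymx.
Proof.
move=> VU.
have e : (n - r)%N = \rank (O V).
  by rewrite rank_ortho (mxrank_unitary VU).
rewrite e; exists (schmidt (row_base (O V))).
apply/unitarymxP; rewrite tr_col_mx map_row_mx mul_col_row.
rewrite !(unitarymxP _) ?schmidt_unitarymx ?rank_leq_col //.
have h1 : V *m (schmidt (row_base (O V)))^t* = 0.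
  apply/orthomx1P; rewrite orthomx_sym.
  by rewrite eqmx_schmidt_free ?row_base_free // eq_row_base.
rewrite h1.
have -> : schmidt (row_base (O V)) *m V^t* = 0.
  apply/orthomx1P.
  by rewrite eqmx_schmidt_free ?row_base_free // eq_row_base.
by rewrite -scalar_mx_block.
Qed.

Lemma complete_rows r n (h : (r <= n)%N) (V : 'M[C]_(r, n)) : V \is unitarymx ->
  exists U : 'M[C]_n, U \is unitarymx /\ forall j a, U (widen_ord h j) a = V j a.
Proof.
move=> /complete_rows0 [W WU].
move: (subnKC h) W WU; move: (n - r)%N => k e.
subst n => W WU; exists (col_mx V W); split => // j a.
have -> : widen_ord h j = lshift k j by apply: val_inj.
by rewrite col_mxEu.
Qed.

Lemma ctrmxK m n (X : 'M[C]_(m, n)) : ctrmx (ctrmx X) = X.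
Proof. by apply/matrixP => i j; rewrite !mxE conjCK. Qed.

Lemma stiefel_complete n r (h : (r <= n)%N) (X : 'M[C]_(n, r)) : stiefel X ->
  exists U : 'M[C]_n, stiefel U /\ first_cols h U = X.
Proof.
move=> hX.
have VU : ctrmx X \is unitarymx.
  by apply/unitarymxP; rewrite -ctrmxE ctrmxK.
have [U [UU HU]] := complete_rows h VU.
exists (ctrmx U); split.
  rewrite /stiefel ctrmxK ctrmxE; exact/unitarymxP.
by apply/matrixP => a j; rewrite !mxE HU !mxE conjCK.
Qed.

Lemma stiefel_first n r (h : (r <= n)%N) (U : 'M[C]_n) : stiefel U ->
  stiefel (first_cols h U).
Proof.
rewrite /stiefel => hU; apply/matrixP => i j.
have := congr1 (fun M : 'M[C]_n => M (widen_ord h i) (widen_ord h j)) hU => /=.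
rewrite !mxE => <-; apply: eq_bigr => a _; rewrite !mxE.
by [].
Qed.

Lemma first_diag n r (h : (r <= n)%N) (U : 'M[C]_n) D :
  first_cols h (U *m diag_mx D) = first_cols h U *m diag_mx (\row_j D 0 (widen_ord h j)).
Proof. by apply/matrixP => a j; rewrite !mul_mx_diag !mxE. Qed.
End S.

Lemma rho_dfwith (R : rcfType) (d : nat) (n r : 'I_d -> nat) (H : forall p, (r p <= n p)%N)
  (Uo : forall p : 'I_d, 'M[R[i]]_(n p, n p)) p (V : 'M[R[i]]_(n p, n p)) :
  rho H (dfwith Uo V) = dfwith (rho H Uo) (first_cols (H p) V).
Proof.
apply: functional_extensionality_dep => q; rewrite /rho.
by case: (eqVneq p q) => [<-|nq]; rewrite ?dfwith_in ?dfwith_out.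
Qed.

Lemma dfwith_ext (d : nat) (T : 'I_d -> Type) (A B : forall q, T q) p (Y : T p) :
  (forall q, p != q -> A q = B q) -> dfwith A Y = dfwith B Y.
Proof.
move=> hAB; apply: functional_extensionality_dep => q.
by case: (eqVneq p q) => [<-|nq]; rewrite ?dfwith_in ?dfwith_out ?hAB.
Qed.

Theorem corollary2p5 (R : realType) (d : nat) (hd : (2 <= d)%N)
  (n r : 'I_d -> nat) (hr1 : forall p, (1 <= r p)%N) (hrn : forall p, (r p <= n p)%N)
  (f : (forall p : 'I_d, 'M[R[i]]_(n p, r p)) -> R) :
  scale_invariant_prod f <->
  scale_invariant_prod (fun U : forall p : 'I_d, 'M[R[i]]_(n p, n p) => f (rho hrn U)).
Proof.
split.
- move=> hf p Uo hUo U hU D hD /=.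
  rewrite !rho_dfwith first_diag.
  apply: hf.
  + by move=> q nq; apply: stiefel_first; apply: hUo.
  + exact: stiefel_first.
  + by move=> j; rewrite mxE.
- move=> hf p Xo hXo X hX D hD /=.
  have ext q : exists U : 'M[R[i]]_(n q), stiefel U /\ (q != p -> first_cols (hrn q) U = Xo q).
    case: (eqVneq q p) => [_|nq].
      exists 1%:M; split => //; rewrite /stiefel mulmx1.
      by apply/matrixP => a b; rewrite /ctrmx !mxE conjC_nat eq_sym.
    have [U [hU1 hU2]] := stiefel_complete (hrn q) (hXo q nq).
    by exists U.
  pose Uo q := proj1_sig (constructive_indefinite_description _ (ext q)).
  have hUo q : stiefel (Uo q) /\ (q != p -> first_cols (hrn q) (Uo q) = Xo q).
    exact: proj2_sig (constructive_indefinite_description _ (ext q)).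
  have [UX [hUX1 hUX2]] := stiefel_complete (hrn p) hX.
  pose D' : 'rV[R[i]]_(n p) := \row_a oapp (fun j => D 0 j) 1 (insub (val a) : option 'I_(r p)).
  have hD' : forall a, `|D' 0 a| = 1.
    move=> a; rewrite mxE; case: insub => [j|] /=; by rewrite ?hD ?normr1.
  have := hf p Uo (fun q nq => proj1 (hUo q)) UX hUX1 D' hD'.
  rewrite /= !rho_dfwith first_diag hUX2.
  have -> : \row_j D' 0 (widen_ord (hrn p) j) = D.
    by apply/matrixP => a j; rewrite !mxE (ord1 a) valK.
  have E (Y : 'M[R[i]]_(n p, r p)) : dfwith (rho hrn Uo) Y = dfwith Xo Y.
    apply: dfwith_ext => q nq; rewrite /rho (proj2 (hUo q)) // eq_sym //.
  by rewrite !E.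
Qed.
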